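(* Let $\mathbb{K}$ be a field of characteristic different from $2$, with algebraic closure $\overline{\mathbb{K}}$. (a) If $\lambda = \alpha+\beta\in\overline{\mathbb{K}}$ with $\alpha\in\mathbb{K}$, $\beta\in Ker(H_\mathbb{K})$, has degree $2$ over $\mathbb{K}$, then the unique conjugate of $\lambda$ over $\mathbb{K}$ (other than $\lambda$) is its $\mathbb{K}$-involution $\overline{\lambda}=\alpha-\beta$. (b) If $\theta_1,\dots,\theta_l\in\overline{\mathbb{K}}$ are algebraic over $\mathbb{K}$ of degree at most $2$, then $\mathbb{K}(\theta_1,\dots,\theta_l)\subseteq\mathcal{R}_\mathbb{K}$ and $\overline{\theta_1+\cdots+\theta_l} = \overline{\theta_1}+\cdots+\overline{\theta_l}$. (c) If $\lambda\in\overline{\mathbb{K}}$ has degree at most $2$ over $\mathbb{K}$, then $\overline{xy}=\overline{x}\,\overline{y}$ for all $x,y\in\mathbb{K}(\lambda)$. (d) If $\beta,\beta'\in Ker(H_\mathbb{K})$ have degree $2$ over $\mathbb{K}$, then $\beta\beta'\in\mathbb{K}$ if and only if $\beta,\beta'$ are linearly dependent over $\mathbb{K}$; otherwise $\beta\beta'$ has degree $2$ over $\mathbb{K}$ and belongs to $Ker(H_\mathbb{K})$. (e) If $\beta\in\overline{\mathbb{K}}$ has degree $2$ over $\mathbb{K}$, then $\beta\in Ker(H_\mathbb{K})$ if and only if $\beta\notin\mathbb{K}$ and $\beta^2\in\mathbb{K}$.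
   Context: An element of $\overline{\mathbb{K}}$ is $\mathbb{K}$-regular if its degree over $\mathbb{K}$ is not a multiple of $char(\mathbb{K})$; $\mathcal{R}_\mathbb{K}$ is the set of such elements. For $\lambda\in\mathcal{R}_\mathbb{K}$ with monic minimal polynomial $X^d + a_{d-1}X^{d-1}+\cdots+a_0$ over $\mathbb{K}$, $H_\mathbb{K}(\lambda) = -a_{d-1}/d\in\mathbb{K}$, $V_\mathbb{K}(\lambda)=\lambda-H_\mathbb{K}(\lambda)$, and $Ker(H_\mathbb{K})=\{\lambda\in\mathcal{R}_\mathbb{K}: H_\mathbb{K}(\lambda)=0\}$. Every $\lambda\in\mathcal{R}_\mathbb{K}$ is uniquely $\lambda=\alpha+\beta$ with $\alpha\in\mathbb{K}$, $\beta\in Ker(H_\mathbb{K})$ (namely $\alpha=H_\mathbb{K}(\lambda)$, $\beta=V_\mathbb{K}(\lambda)$); the $\mathbb{K}$-involution of $\lambda$ is $\overline{\lambda}=\alpha-\beta$. *)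

(* Defs.v *)
From HB Require Import structures.
From mathcomp Require Import all_boot all_order all_algebra.
From Stdlib Require Import ClassicalEpsilon.
Set Implicit Arguments. Unset Strict Implicit. Unset Printing Implicit Defensive.
Import Order.TTheory GRing.Theory Num.Theory.
Local Open Scope ring_scope.

(* The base field K is [F]; its algebraic closure is modelled by an
   algebraically closed field [L] with an embedding [iota : F -> L] such that
   every element of [L] is algebraic over [iota F] (hypothesis of the theorem). *)

Section Defs.
Variables (F : fieldType) (L : closedFieldType) (iota : {rmorphism F -> L}).

Definition inK (x : L) : Prop := exists a : F, x = iota a.

Definition is_minpoly (p : {poly F}) (x : L) : Prop :=
  [/\ p \is monic, root (map_poly iota p) x &
      forall q : {poly F}, root (map_poly iota q) x -> p %| q].

(* the minimal polynomial of x over K (chosen; unique when x is algebraic) *)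
Definition minpolyK (x : L) : {poly F} :=
  epsilon (inhabits 0) (fun p => is_minpoly p x).

Definition degK (x : L) : nat := (size (minpolyK x)).-1.

(* K-regular: degree not a multiple of char K, i.e. (deg x)%:R <> 0 in K *)
Definition regularK (x : L) : Prop := (degK x)%:R != 0 :> F.

Definition HK (x : L) : F := - (minpolyK x)`_(degK x).-1 / (degK x)%:R.

Definition VK (x : L) : L := x - iota (HK x).

Definition inKerH (x : L) : Prop := regularK x /\ HK x = 0.

Definition kinv (x : L) : L := iota (HK x) - VK x.

Definition subfield_over (S : L -> Prop) : Prop :=
  [/\ forall a : F, S (iota a),
      forall x y, S x -> S y -> S (x + y),
      forall x, S x -> S (- x),
      forall x y, S x -> S y -> S (x * y) &
      forall x, S x -> S (x^-1)].

Definition in_gen_field (ts : seq L) (x : L) : Prop :=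
  forall S : L -> Prop, subfield_over S -> (forall t, t \in ts -> S t) -> S x.

Definition lin_dep2 (b b' : L) : Prop :=
  exists a a' : F, (a != 0 \/ a' != 0) /\ iota a * b + iota a' * b' = 0.

End Defs.

(* Main.v *)
Require Import Defs.
From HB Require Import structures.
From mathcomp Require Import all_boot all_order all_algebra.
From mathcomp Require Import all_field.
From Stdlib Require Import ClassicalEpsilon.
From mathcomp Require Import zify ring.
Set Implicit Arguments. Unset Strict Implicit. Unset Printing Implicit Defensive.
Import Order.TTheory GRing.Theory Num.Theory.
Local Open Scope ring_scope.

Section P0.
Variables (F : fieldType) (L : closedFieldType) (iota : {rmorphism F -> L}).
Hypothesis Lalg : forall x : L, exists p : {poly F}, p != 0 /\ root (map_poly iota p) x.

Local Notation "p ^i" := (map_poly iota p) (at level 2, format "p ^i").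

Lemma root_mod (p q : {poly F}) x : root p^i x -> root q^i x -> root (q %% p)^i x.
Proof.
move=> rp rq; move: rq; rewrite {1}(divp_eq q p) rmorphD rmorphM /= rootE !hornerE.
by rewrite (rootP rp) mulr0 add0r.
Qed.

Lemma minpoly_exists x : exists p, is_minpoly iota p x.
Proof.
have [p0 [nz0 r0]] := Lalg x.
suff: forall n (p : {poly F}), (size p <= n)%N -> p != 0 -> root p^i x -> exists p, is_minpoly iota p x.
  by move/(_ _ p0 (leqnn _) nz0 r0).
elim=> [|n IH] p sp nzp rp; first by move: nzp; rewrite -size_poly_eq0 -leqn0 sp.
case: (classic (forall q, root q^i x -> p %| q)) => [H|].
  exists ((lead_coef p)^-1 *: p); split.
  - by rewrite monicE lead_coefZ mulVf // lead_coef_eq0.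
  - by rewrite map_polyZ rootE hornerZ (rootP rp) mulr0.
  - by move=> q /H; rewrite dvdpZl // invr_eq0 lead_coef_eq0.
move=> H; have [q Hq] := not_all_ex_not _ _ H.
have rq : root q^i x by apply: NNPP => C; apply: Hq => /C.
have npq : ~ p %| q by move=> D; apply: Hq.
apply: (IH (q %% p)).
- by rewrite -ltnS (leq_trans _ sp) // ltn_modp.
- by apply/negP => /eqP/modp_eq0P.
- exact: root_mod.
Qed.

Lemma minpolyK_spec x : is_minpoly iota (minpolyK iota x) x.
Proof. exact: (epsilon_spec _ (fun p : {poly F} => is_minpoly iota p x) (minpoly_exists x)). Qed.

Lemma mp_monic x : minpolyK iota x \is monic.
Proof. by case: (minpolyK_spec x). Qed.
Lemma mp_root x : root (minpolyK iota x)^i x.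
Proof. by case: (minpolyK_spec x). Qed.
Lemma mp_dvd x q : root q^i x -> minpolyK iota x %| q.
Proof. by case: (minpolyK_spec x) => _ _; apply. Qed.

Lemma mp_unique p x : is_minpoly iota p x -> minpolyK iota x = p.
Proof.
case=> mp rp dp; apply/eqP; rewrite -eqp_monic ?mp_monic //.
by rewrite /eqp mp_dvd //= dp // mp_root.
Qed.

Lemma mp_size x : (1 < size (minpolyK iota x))%N.
Proof.
have := mp_root x; rewrite -(size_map_poly iota) => r.
by rewrite (root_size_gt1 _ r) // map_poly_eq0 monic_neq0 ?mp_monic.
Qed.

Lemma degK_gt0 x : (0 < degK iota x)%N.
Proof. by rewrite /degK -subn1 subn_gt0 mp_size. Qed.

Lemma mp_irr x : irreducible_poly (minpolyK iota x).
Proof.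
split; first exact: mp_size.
move=> q nq1 /dvdpP[r Dm].
have nzm : minpolyK iota x != 0 by rewrite monic_neq0 ?mp_monic.
have [nzr nzq] : r != 0 /\ q != 0 by apply/norP; rewrite -mulf_eq0 -Dm.
have := mp_root x; rewrite Dm rmorphM rootM => /orP[] rx.
  have : minpolyK iota x %| r by apply: mp_dvd.
  move/dvdp_leq => /(_ nzr); rewrite Dm size_mul // => h.
  have := size_poly_gt0 q; have := size_poly_gt0 r; rewrite nzq nzr; move: nq1 h => /eqP.
  lia.
apply/andP; split; [exact: dvdp_mulIr | rewrite -Dm; exact: mp_dvd].
Qed.


Hypothesis char2 : (2%:R : F) != 0.

Lemma iota2 : (2%:R : L) != 0.
Proof. by rewrite -(rmorph_nat iota) fmorph_eq0. Qed.

Lemma mp_K a : minpolyK iota (iota a) = 'X - a%:P.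
Proof.
apply: mp_unique; split; first exact: monicXsubC.
  by rewrite rmorphB /= map_polyX map_polyC /= root_XsubC.
move=> q; rewrite /root horner_map fmorph_eq0 => rq.
by rewrite dvdp_XsubCl.
Qed.

Lemma degK_K a : degK iota (iota a) = 1%N.
Proof. by rewrite /degK mp_K size_XsubC. Qed.

Lemma HK_K a : HK iota (iota a) = a.
Proof.
rewrite /HK degK_K mp_K /= coefB coefX coefC /= sub0r opprK.
by rewrite divr1.
Qed.

Lemma kinv_K a : kinv iota (iota a) = iota a.
Proof. by rewrite /kinv /VK HK_K subrr subr0. Qed.

Lemma horner2 (R : nzRingType) (p : {poly R}) x : size p = 2%N -> p.[x] = p`_0 + p`_1 * x.
Proof. by move=> sp; rewrite horner_coef sp !big_ord_recl big_ord0 /= expr0 mulr1 expr1 addr0. Qed.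

Lemma horner3 (R : nzRingType) (p : {poly R}) x : size p = 3%N ->
  p.[x] = p`_0 + p`_1 * x + p`_2 * x ^+ 2.
Proof.
move=> sp; rewrite horner_coef sp !big_ord_recl big_ord0 /= expr0 mulr1 expr1 addr0.
by rewrite addrA.
Qed.

Lemma degK1 x : degK iota x = 1%N -> inK iota x.
Proof.
rewrite /degK => d1.
have sp : size (minpolyK iota x) = 2%N by rewrite -(prednK (ltnW (mp_size x))) d1.
have m1 : (minpolyK iota x)`_1 = 1.
  by have := mp_monic x; rewrite monicE lead_coefE sp => /eqP.
have := mp_root x; rewrite /root horner2 ?size_map_poly // !coef_map /= m1 rmorph1 mul1r.
move=> /eqP h; exists (- (minpolyK iota x)`_0).
by apply/eqP; rewrite rmorphN -addr_eq0 addrC h.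
Qed.

Lemma inK_deg x : inK iota x -> degK iota x = 1%N.
Proof. by case=> a ->; apply: degK_K. Qed.

Definition pq (h c : F) : {poly F} := ('X - (h *+ 2)%:P) * 'X + (h ^+ 2 - c)%:P.

Lemma pq_size h c : size (pq h c) = 3%N.
Proof.
rewrite /pq size_MXaddC size_XsubC.
by have -> : ('X - (h *+ 2)%:P == 0) = false by apply/negbTE; rewrite -size_poly_eq0 size_XsubC.
Qed.

Lemma pq_monic h c : pq h c \is monic.
Proof.
rewrite monicE lead_coefE pq_size /pq coefD coefMX coefC /= addr0.
by rewrite coefB coefX coefC subr0.
Qed.

Lemma pq_coef1 h c : (pq h c)`_1 = - (h *+ 2).
Proof. by rewrite /pq coefD coefMX coefC /= addr0 coefB coefX coefC sub0r. Qed.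

Lemma pq_root h c y : root (pq h c)^i y = ((y - iota h) ^+ 2 == iota c).
Proof.
rewrite /root /pq rmorphD rmorphM rmorphB /= map_polyX !map_polyC /= !hornerE.
rewrite rmorphB rmorphMn rmorphXn /= -[in RHS]subr_eq0.
by congr (_ == _); ring.
Qed.

Lemma mp_quad y h c : ~ inK iota y -> (y - iota h) ^+ 2 = iota c ->
  minpolyK iota y = pq h c.
Proof.
move=> nK e; have r : root (pq h c)^i y by rewrite pq_root e.
have d := mp_dvd r.
have sz := dvdp_leq (monic_neq0 (pq_monic h c)) d; rewrite pq_size in sz.
have s2 := mp_size y.
case E3 : (size (minpolyK iota y) == 3%N).
  apply/eqP; rewrite -eqp_monic ?mp_monic ?pq_monic // -dvdp_size_eqp //.
  by rewrite pq_size.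
exfalso; apply: nK; apply: degK1; rewrite /degK.
have -> : size (minpolyK iota y) = 2%N.
  by move/negbT: E3; move: sz s2; case: (size _) => [|[|[|[|n]]]].
by [].
Qed.

Lemma quad_props y h c : ~ inK iota y -> (y - iota h) ^+ 2 = iota c ->
  degK iota y = 2%N /\ HK iota y = h.
Proof.
move=> nK e; rewrite /HK /degK (mp_quad nK e) pq_size /= pq_coef1 opprK.
by split => //; rewrite -[h *+ 2]mulr_natr mulfK.
Qed.

Lemma deg2_struct x : degK iota x = 2%N ->
  ~ inK iota x /\ exists c, (x - iota (HK iota x)) ^+ 2 = iota c.
Proof.
move=> d2; split; first by move/inK_deg; rewrite d2.
set m := minpolyK iota x.
have sp : size m = 3%N by rewrite /m -(prednK (ltnW (mp_size x))) -/(degK iota x) d2.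
have m2 : m`_2 = 1.
  by have := mp_monic x; rewrite monicE lead_coefE sp => /eqP.
have := mp_root x; rewrite /root horner3 ?size_map_poly // !coef_map /= m2 rmorph1 mul1r.
move=> /eqP h.
exists ((HK iota x) ^+ 2 - m`_0).
rewrite /HK d2 /= -/m.
apply/eqP; rewrite -subr_eq0 -h.
rewrite rmorphB rmorphXn rmorphM rmorphN fmorphV rmorph_nat /=.
apply/eqP; field.
exact: iota2.
Qed.

Lemma nK0 : inK iota 0.
Proof. by exists 0; rewrite rmorph0. Qed.

Lemma part_e b : degK iota b = 2%N ->
  (inKerH iota b <-> ~ inK iota b /\ inK iota (b ^+ 2)).
Proof.
move=> d2; split.
  case=> _ h0; have [nK [c e]] := deg2_struct d2.
  by split => //; exists c; rewrite -e h0 rmorph0 subr0.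
case=> nK [c e].
have e' : (b - iota 0) ^+ 2 = iota c by rewrite rmorph0 subr0.
have [d h] := quad_props nK e'.
by split => //; rewrite /regularK d.
Qed.

Lemma part_a (alpha : F) (beta : L) :
     inKerH iota beta -> degK iota (iota alpha + beta) = 2%N ->
     let lam := iota alpha + beta in
     [/\ kinv iota lam = iota alpha - beta,
         root (map_poly iota (minpolyK iota lam)) (kinv iota lam),
         kinv iota lam != lam &
         forall mu : L, root (map_poly iota (minpolyK iota lam)) mu ->
           mu = lam \/ mu = kinv iota lam].
Proof.
move=> [_ hb] d2 lam.
have [nK [c e]] := deg2_struct d2.
have nKb : ~ inK iota beta.
  by case=> a ea; apply: nK; exists (alpha + a); rewrite /lam ea rmorphD.
have e' : (beta - iota (HK iota lam - alpha)) ^+ 2 = iota c.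
  by rewrite -e rmorphB /lam; congr (_ ^+ 2); ring.
have [_ Hb] := quad_props nKb e'.
have hl : HK iota lam = alpha by apply/eqP; rewrite -subr_eq0 -Hb hb.
have ki : kinv iota lam = iota alpha - beta.
  by rewrite /kinv /VK hl /lam; ring.
have mp : minpolyK iota lam = pq alpha c by rewrite (mp_quad nK e) hl.
have ec : beta ^+ 2 = iota c by rewrite -e hl /lam; congr (_ ^+ 2); ring.
split => //.
- by rewrite mp ki pq_root -ec; apply/eqP; ring.
- rewrite ki /lam; apply/negP => /eqP h.
  have : beta *+ 2 = 0 by rewrite -(subrr (iota alpha + beta)) -{2}h; ring.
  move/eqP; rewrite -mulr_natr mulf_eq0 (negPf iota2) orbF => /eqP b0.
  by apply: nKb; rewrite b0; apply: nK0.
- move=> mu; rewrite mp pq_root -ec => /eqP h.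
  have : (mu - lam) * (mu - (iota alpha - beta)) = 0.
    rewrite /lam; have -> : (mu - (iota alpha + beta)) * (mu - (iota alpha - beta)) =
       (mu - iota alpha) ^+ 2 - beta ^+ 2 by ring.
    by rewrite h subrr.
  move/eqP; rewrite mulf_eq0 !subr_eq0 => /orP[] /eqP ->; [by left | by right].
Qed.

Lemma part_d b b' : inKerH iota b -> inKerH iota b' ->
     degK iota b = 2%N -> degK iota b' = 2%N ->
     (inK iota (b * b') <-> lin_dep2 iota b b') /\ (~ lin_dep2 iota b b' -> degK iota (b * b') = 2%N /\ inKerH iota (b * b')).
Proof.
move=> [_ h1] [_ h2] d1 d2.
have [nK1 [c ec]] := deg2_struct d1; have [nK2 [c' ec']] := deg2_struct d2.
rewrite h1 rmorph0 subr0 in ec; rewrite h2 rmorph0 subr0 in ec'.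
have nz1 : b != 0 by apply/negP => /eqP b0; apply: nK1; rewrite b0; apply: nK0.
have nz2 : b' != 0 by apply/negP => /eqP b0; apply: nK2; rewrite b0; apply: nK0.
have eqv : inK iota (b * b') <-> lin_dep2 iota b b'.
  split.
    case=> k ek; exists k, (- c); split.
      left; rewrite -(fmorph_eq0 iota) -ek; exact: mulf_neq0.
    by rewrite -ek rmorphN -ec; ring.
  case=> a [a' [nz eq]].
  have nza' : a' != 0.
    apply/negP => /eqP a0; move: eq; rewrite a0 rmorph0 mul0r addr0 => /eqP.
    rewrite mulf_eq0 fmorph_eq0 (negPf nz1) orbF => /eqP a00.
    by case: nz => /negP; apply; apply/eqP.
  have ia' : iota a' != 0 by rewrite fmorph_eq0.
  exists (- (a / a') * c).
  apply: (mulfI ia').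
  have eq' : iota a' * b' = - (iota a * b) by apply/eqP; rewrite -addr_eq0 addrC eq.
  rewrite mulrCA eq' !(rmorphM, rmorphN, fmorphV) /= -ec.
  by field.
split => // nld.
have nK : ~ inK iota (b * b') by move/eqv.
have e' : (b * b' - iota 0) ^+ 2 = iota (c * c') by rewrite rmorph0 subr0 exprMn ec ec' rmorphM.
have [d h] := quad_props nK e'.
by split => //; split => //; rewrite /regularK d.
Qed.

Lemma subfield_K : subfield_over iota (inK iota).
Proof.
split.
- by move=> a; exists a.
- by move=> x y [a ->] [b ->]; exists (a + b); rewrite rmorphD.
- by move=> x [a ->]; exists (- a); rewrite rmorphN.
- by move=> x y [a ->] [b ->]; exists (a * b); rewrite rmorphM.
- by move=> x [a ->]; exists (a^-1); rewrite fmorphV.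
Qed.

Lemma kinv_quad v c (a b : F) : ~ inK iota v -> v ^+ 2 = iota c ->
  kinv iota (iota a + iota b * v) = iota a - iota b * v.
Proof.
move=> nK ev.
case: (eqVneq b 0) => [-> | nzb].
  by rewrite rmorph0 mul0r addr0 subr0 kinv_K.
have ib : iota b != 0 by rewrite fmorph_eq0.
have nKz : ~ inK iota (iota a + iota b * v).
  case=> k ek; apply: nK; exists ((k - a) / b).
  by rewrite rmorphM fmorphV rmorphB -ek /=; field.
have e : (iota a + iota b * v - iota a) ^+ 2 = iota (b ^+ 2 * c).
  by rewrite rmorphM rmorphXn -ev; ring.
have [_ h] := quad_props nKz e.
by rewrite /kinv /VK h; ring.
Qed.

Lemma part_c lam : (degK iota lam <= 2)%N ->
  forall x y : L, in_gen_field iota [:: lam] x -> in_gen_field iota [:: lam] y ->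
       kinv iota (x * y) = kinv iota x * kinv iota y.
Proof.
move=> dl x y.
have := degK_gt0 lam.
case D : (degK iota lam) dl => [|[|[|n]]] // _ _.
  move=> gx gy.
  have hl : forall t, t \in [:: lam] -> inK iota t.
    by move=> t; rewrite inE => /eqP ->; apply: degK1.
  have [a ->] := gx _ subfield_K hl; have [b ->] := gy _ subfield_K hl.
  by rewrite [kinv _ (iota a)]kinv_K [kinv _ (iota b)]kinv_K -rmorphM kinv_K.
have [nK [c e]] := deg2_struct D.
set v := lam - iota (HK iota lam) in e.
have nKv : ~ inK iota v.
  case=> k ek; apply: nK; exists (k + HK iota lam).
  by rewrite rmorphD -ek /v subrK.
pose S z := exists a b : F, z = iota a + iota b * v.
have SK : subfield_over iota S.
  split.
  - by move=> a; exists a, 0; rewrite rmorph0 mul0r addr0.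
  - move=> _ _ [a [b ->]] [a' [b' ->]]; exists (a + a'), (b + b').
    by rewrite !rmorphD; ring.
  - move=> _ [a [b ->]]; exists (- a), (- b).
    by rewrite !rmorphN; ring.
  - move=> _ _ [a [b ->]] [a' [b' ->]]; exists (a * a' + b * b' * c), (a * b' + a' * b).
    by rewrite !(rmorphD, rmorphM) -e; ring.
  - move=> _ [a [b ->]].
    case: (eqVneq (iota a + iota b * v) 0) => [-> | nz].
      by rewrite invr0; exists 0, 0; rewrite rmorph0 mul0r addr0.
    pose N := a ^+ 2 - b ^+ 2 * c.
    have nzN : N != 0.
      apply/negP => /eqP N0.
      case: (eqVneq b 0) => [b0 | nzb].
        move: N0 nz; rewrite /N b0 expr0n /= mul0r subr0 rmorph0 mul0r addr0 => /eqP.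
        by rewrite expf_eq0 /= => /eqP ->; rewrite rmorph0 eqxx.
      have : (v - iota (a / b)) * (v + iota (a / b)) = 0.
        have Ea : a ^+ 2 = b ^+ 2 * c by apply/eqP; rewrite -subr_eq0 -/N N0.
        have ib : iota b != 0 by rewrite fmorph_eq0.
        rewrite rmorphM fmorphV.
        have -> : (v - iota a * (iota b)^-1) * (v + iota a * (iota b)^-1) =
                  v ^+ 2 - iota (a ^+ 2) / iota (b ^+ 2).
          by rewrite !rmorphXn /=; field.
        by rewrite Ea rmorphM -e [iota _ * _]mulrC mulfK ?subrr // rmorphXn expf_neq0.
      move/eqP; rewrite mulf_eq0 => /orP[] /eqP h; apply: nKv.
        by exists (a / b); apply/eqP; rewrite -subr_eq0 h.
      exists (- (a / b)); apply/eqP; rewrite rmorphN -subr_eq0 opprK h //.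
    have iN : iota N != 0 by rewrite fmorph_eq0.
    exists (a / N), (- b / N).
    apply: (mulfI nz); rewrite mulfV //.
    rewrite !(rmorphM, rmorphN, fmorphV) /=.
    have EN : iota N = iota a ^+ 2 - iota b ^+ 2 * v ^+ 2.
      by rewrite /N e !(rmorphB, rmorphM, rmorphXn); ring.
    rewrite EN; rewrite EN in iN.
    by field; rewrite exprMn.
have Slam : forall t, t \in [:: lam] -> S t.
  move=> t; rewrite inE => /eqP ->; exists (HK iota lam), 1.
  by rewrite rmorph1 mul1r /v addrC subrK.
move=> gx gy.
have [a [b ->]] := gx _ SK Slam; have [a' [b' ->]] := gy _ SK Slam.
have -> : (iota a + iota b * v) * (iota a' + iota b' * v) =
          iota (a * a' + b * b' * c) + iota (a * b' + a' * b) * v.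
  by rewrite !(rmorphD, rmorphM) -e; ring.
rewrite !(kinv_quad _ _ nKv e).
by rewrite !(rmorphD, rmorphM) -e; ring.
Qed.

Lemma pow_irr (chi mu : {poly F}) : chi \is monic -> irreducible_poly mu ->
  mu \is monic -> (forall z, root chi^i z -> root mu^i z) -> exists k, chi = mu ^+ k.
Proof.
move=> + irr mm.
have nzmu : mu != 0 by rewrite monic_neq0.
have smu : (1 < size mu)%N by case: irr.
elim: {chi}(size chi) {-2}chi (leqnn (size chi)) => [|n IH] chi sc mc hr.
  by move: (monic_neq0 mc); rewrite -size_poly_eq0 -leqn0 sc.
case S1 : (size chi == 1%N).
  exists 0%N; rewrite expr0.
  have [c _ ec] := size_poly1P _ S1.
  by move: mc; rewrite ec monicE lead_coefC => /eqP ->.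
have [z rz] : exists z, root chi^i z.
  by apply/closed_rootP; rewrite size_map_poly S1.
have rmz := hr _ rz.
have dmc : mu %| chi.
  have g1 : size (gcdp mu chi) != 1%N.
    rewrite -(size_map_poly iota) gcdp_map.
    apply/closed_rootP; exists z; by rewrite root_gcd rmz rz.
  have := irr.2 _ g1 (dvdp_gcdl _ _).
  by move/eqp_dvdl => <-; apply: dvdp_gcdr.
have Dc : chi = chi %/ mu * mu by apply/eqP; rewrite -dvdp_eq.
have mc' : chi %/ mu \is monic by rewrite -(monicMr _ mm) -Dc.
have nzc' : chi %/ mu != 0 by rewrite monic_neq0.
have [k ek] : exists k, chi %/ mu = mu ^+ k.
  apply: IH => //.
    move: sc; rewrite {1}Dc size_mul //; move: smu; rewrite -!subn1.
    have := size_poly_gt0 (chi %/ mu); rewrite nzc'; set s1 := size _; set s2 := size mu; move=> h1 h2 h3. lia.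
  by move=> z' r; apply: hr; rewrite Dc rmorphM rootM r.
by exists k.+1; rewrite Dc ek exprSr.
Qed.

Lemma coefM_top (p q : {poly F}) m l : p \is monic -> q \is monic ->
  size p = m.+2 -> size q = l.+2 -> (p * q)`_(m + l + 1) = p`_m + q`_l.
Proof.
move=> mp mq sp sq.
have s1 : forall (r : {poly F}) k, r \is monic -> size r = k.+2 -> (size (r - 'X^(k.+1))%R <= k.+1)%N.
  move=> r k mr sr; apply/leq_sizeP => j hj.
  rewrite coefB coefXn; case: (eqVneq j k.+1) => [-> | ne].
    by move: mr; rewrite monicE lead_coefE sr => /eqP ->; rewrite subrr.
  rewrite subr0 nth_default // sr; move: hj ne; lia.
pose p1 := p - 'X^(m.+1); pose q1 := q - 'X^(l.+1).
have sp1 : (size p1 <= m.+1)%N := s1 _ _ mp sp.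
have sq1 : (size q1 <= l.+1)%N := s1 _ _ mq sq.
have -> : p * q = 'X^(m.+1) * q + p1 * 'X^(l.+1) + p1 * q1 by rewrite /p1 /q1; ring.
rewrite !coefD coefXnM coefMXn.
have -> : (m + l + 1 < m.+1)%N = false by apply/negbTE; rewrite -leqNgt; lia.
have -> : (m + l + 1 < l.+1)%N = false by apply/negbTE; rewrite -leqNgt; lia.
have -> : (m + l + 1 - m.+1 = l)%N by lia.
have -> : (m + l + 1 - l.+1 = m)%N by lia.
have -> : (p1 * q1)`_(m + l + 1) = 0.
  apply: nth_default; apply: (leq_trans (size_polyMleq _ _)).
  move: sp1 sq1; lia.
rewrite addr0 /p1 coefB coefXn.
have -> : (m == m.+1) = false by lia.
by rewrite subr0 addrC.
Qed.

Lemma coef_pow (mu : {poly F}) d k : mu \is monic -> size mu = d.+2 ->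
  (mu ^+ k.+1)`_(k.+1 * d.+1).-1 = k.+1%:R * mu`_d.
Proof.
move=> mm sm; elim: k => [|k IH]; first by rewrite expr1 mul1n mul1r.
have mk : mu ^+ k.+1 \is monic by apply: monic_exp.
have sk : size (mu ^+ k.+1) = (k.+1 * d.+1).-1.+2.
  have := size_exp mu k.+1; rewrite sm /=.
  have := size_poly_gt0 (mu ^+ k.+1); rewrite monic_neq0 // => h1 h2.
  rewrite -(prednK h1) h2; lia.
rewrite exprSr.
have -> : (k.+2 * d.+1).-1 = ((k.+1 * d.+1).-1 + d + 1)%N by lia.
by rewrite (coefM_top mk mm sk sm) IH -[k.+2]addn1 natrD mulrDl mul1r.
Qed.

Lemma mx_facts n (A : 'M[F]_n.+1) (mu : {poly F}) : mu \is monic ->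
  irreducible_poly mu -> horner_mx A mu = 0 ->
  exists k, (n.+1 = k * (size mu).-1)%N /\ \tr A = k%:R * (- mu`_((size mu).-2)).
Proof.
move=> mm irr h0.
have dm := mxminpoly_min h0.
have hr : forall z, root (char_poly A)^i z -> root mu^i z.
  move=> z; rewrite map_char_poly -root_mxminpoly mxminpoly_map.
  by apply: root_dvdp; rewrite dvdp_map.
have [k ek] := pow_irr (char_poly_monic A) irr mm hr.
have smu : (1 < size mu)%N by case: irr.
have sk : n.+1 = ((size mu).-1 * k)%N.
  by rewrite -size_exp -ek size_char_poly.
exists k; split; first by rewrite mulnC.
have := char_poly_trace A (ltn0Sn n); rewrite /= ek => ht.
case: k ek sk ht => [|k] ek sk ht; first by move: sk; rewrite muln0.
have [d sd] : exists d, size mu = d.+2 by exists (size mu).-2; move: smu; case: (size mu) => [|[|]].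
move: sk ht; rewrite sd /= => sk.
move=> ht.
have ht' : (mu ^+ k.+1)`_((k.+1 * d.+1).-1) = - \tr A.
  have hn : (k.+1 * d.+1).-1 = n by rewrite mulnC -sk.
  by rewrite hn.
by rewrite (coef_pow _ mm sd) in ht'; rewrite mulrN ht' opprK.
Qed.

Lemma rep_facts (E : fieldExtType F) (phi : {rmorphism E -> L})
  (phiA : forall a, phi a%:A = iota a) N (f : {linear E -> 'rV[F]_N})
  (g : 'rV[F]_N -> E) : (N%:R : F) != 0 -> cancel f g -> cancel g f ->
  exists T : E -> F, (forall a b, T (a + b) = T a + T b) /\
    forall e, regularK iota (phi e) /\ HK iota (phi e) * N%:R = T e.
Proof.
case: N f g => [|N] f g; first by rewrite eqxx.
move=> nN fK gK.
have gL : linear g := can2_linear fK gK.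
pose fe (e : E) (r : 'rV[F]_N.+1) := f (e * g r).
have feL : forall e, linear (fe e).
  move=> e a u v; rewrite /fe gL mulrDr -scalerAr.
  by rewrite linearP.
pose M e := lin1_mx (fe e).
have mulM : forall e u, u *m M e = fe e u.
  move=> e u.
  pose fl : {linear 'rV[F]_N.+1 -> 'rV[F]_N.+1} :=
    HB.pack (fe e) (GRing.isSemilinear.Build F _ _ _ (fe e) (GRing.semilinear_linear (feL e))).
  exact: (mul_rV_lin1 fl u).
have M_ext : forall A B : 'M[F]_N.+1, (forall u : 'rV_N.+1, u *m A = u *m B) -> A = B.
  by move=> A B h; apply/row_matrixP => i; rewrite !rowE h.
have MD : forall a b, M (a + b) = M a + M b.
  by move=> a b; apply: M_ext => u; rewrite mulmxDr !mulM /fe mulrDl linearD.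
have MM : forall a b, M (a * b) = M a * M b.
  move=> a b; apply: M_ext => u; rewrite -mulmxE mulmxA !mulM /fe fK.
  by rewrite mulrA [a * b]mulrC.
have MA : forall c, M (c%:A) = c%:M.
  move=> c; apply: M_ext => u; rewrite mulM mul_mx_scalar /fe mulr_algl linearZ /=.
  by rewrite gK.
have M0 : M 0 = 0.
  by apply: M_ext => u; rewrite mulM mulmx0 /fe mul0r linear0.
have Mh : forall e p, horner_mx (M e) p = M ((map_poly (in_alg E) p).[e]).
  move=> e; elim/poly_ind => [|p c IH]; first by rewrite !rmorph0 horner0 M0.
  rewrite rmorphD rmorphM /= horner_mx_X horner_mx_C IH.
  by rewrite rmorphD rmorphM /= map_polyX map_polyC !hornerE MD MM MA.
exists (fun e => \tr (M e)); split.
  by move=> a b; rewrite MD mxtraceD.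
move=> e.
set mu := minpolyK iota (phi e).
have h0 : horner_mx (M e) mu = 0.
  rewrite Mh.
  have -> : (map_poly (in_alg E) mu).[e] = 0.
    apply: (fmorph_inj phi); rewrite rmorph0 -horner_map -map_poly_comp.
    rewrite (eq_map_poly phiA); apply/eqP; exact: mp_root.
  exact: M0.
have [k [hk ht]] := mx_facts (mp_monic (phi e)) (mp_irr (phi e)) h0.
have hd : (N.+1 = k * degK iota (phi e))%N by rewrite hk.
have nd : ((degK iota (phi e))%:R : F) != 0.
  by move: nN; rewrite hd natrM mulf_eq0 negb_or => /andP[].
split => //.
rewrite ht hd natrM /HK -/mu.
have -> : (degK iota (phi e)).-1 = (size mu).-2 by [].
by field.
Qed.

Record ext := Ext {
  extE : fieldExtType F;
  extphi : {rmorphism extE -> L};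
  extphiA : forall a, extphi a%:A = iota a;
  extdim : exists m, \dim {:extE} = (2 ^ m)%N }.

Lemma step0 (X : ext) (t : L) (q : {poly extE X})
  (qt : root (map_poly (extphi X) q) t) (irr : irreducible_poly q) (sq : size q = 3%N) :
  exists Y : ext, (forall e : extE X, exists e', extphi Y e' = extphi X e) /\
     (exists e', extphi Y e' = t).
Proof.
have nzq := irredp_neq0 irr.
pose E' := SubFieldExtType qt irr.
pose E0 := baseFieldType E'.
pose phi0 : {rmorphism E0 -> L} := @subfx_inj _ _ (extphi X) t q.
have phiA : forall a, phi0 a%:A = iota a.
  move=> a. rewrite /phi0 /= baseField_scaleE.
  rewrite (subfx_injZ qt nzq) rmorph1 mulr1. exact: extphiA.
have dm : exists m, \dim {:E0} = (2 ^ m)%N.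
  have [m hm] := extdim X.
  exists m.+1.
  have -> : (fullv : {vspace E0}) = baseVspace (fullv : {vspace E'}).
    apply/vspaceP => x; rewrite mem_baseVspace; apply/idP/idP => _; exact: memvf.
  have dE : dim E' = (size q).-1 := erefl.
  by rewrite dim_baseVspace hm dimvf dE sq expnS.
exists (Ext phiA dm); split.
  move=> e; exists ((e%:A : E') : E0). exact: (subfx_inj_base qt nzq).
exists (subfx_root _ t q : E0). exact: subfx_inj_root qt nzq.
Qed.

Lemma ext_base : ext.
Proof.
have r0 : root (map_poly iota ('X - 0%:P)) 0.
  by rewrite rmorphB /= map_polyX map_polyC /= rmorph0 root_XsubC.
pose E0 := SubFieldExtType r0 (irredp_XsubC 0).
pose phi0 : {rmorphism E0 -> L} := @subfx_inj _ _ iota 0 ('X - 0%:P).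
have nz : ('X - 0%:P : {poly F}) != 0 by rewrite -size_poly_eq0 size_XsubC.
have phiA : forall a, phi0 a%:A = iota a by move=> a; apply: (subfx_inj_base r0 nz).
have dm : exists m, \dim {:E0} = (2 ^ m)%N.
  by exists 0%N; rewrite dimvf; have -> : dim E0 = (size ('X - 0%:P : {poly F})).-1 := erefl; rewrite size_XsubC.
exact: (Ext phiA dm).
Qed.

Lemma step (X : ext) (t : L) : (degK iota t <= 2)%N ->
  exists Y : ext, (forall e : extE X, exists e', extphi Y e' = extphi X e) /\
     (exists e', extphi Y e' = t).
Proof.
move=> dt.
case: (classic (exists e, extphi X e = t)) => [He | nH].
  by exists X; split => // e; exists e.
have nKt : ~ inK iota t.
  by case=> a ea; apply: nH; exists (a%:A); rewrite extphiA ea.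
have d2 : degK iota t = 2%N.
  have := degK_gt0 t; case D : (degK iota t) dt => [|[|[|]]] // _ _.
  by exfalso; apply: nKt; apply: degK1.
have [_ [c e]] := deg2_struct d2.
set h := HK iota t in e.
pose q := map_poly (in_alg (extE X)) (pq h c).
have sq : size q = 3%N by rewrite size_map_poly pq_size.
have mq : forall z, root (map_poly (extphi X) q) z = ((z - iota h) ^+ 2 == iota c).
  move=> z; rewrite -map_poly_comp (eq_map_poly (extphiA X)); exact: pq_root.
have qt : root (map_poly (extphi X) q) t by rewrite mq e.
have nzq : q != 0 by rewrite -size_poly_eq0 sq.
have irr : irreducible_poly q.
  split; first by rewrite sq.
  move=> d nd1 dq.
  have nzd : d != 0 by apply/negP => /eqP d0; move: dq nzq; rewrite d0 dvd0p => ->.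
  have sd := dvdp_leq nzq dq; rewrite sq in sd.
  case S3 : (size d == 3%N); first by rewrite -dvdp_size_eqp // sq.
  exfalso.
  have sd2 : (1 < size d < size q)%N.
    rewrite sq; move: nd1 S3 sd; have := size_poly_gt0 d; rewrite nzd.
    by case: (size d) => [|[|[|[|]]]].
  have sq4 : (size q <= 4)%N by rewrite sq.
  have [r rr] := reducible_cubic_root sq4 sd2 dq.
  have rq : root q r := rr.
  have : root (map_poly (extphi X) q) (extphi X r).
    by rewrite /root horner_map (rootP rq) rmorph0.
  rewrite mq => /eqP er.
  have : (extphi X r - t) * (extphi X r + t - iota h *+ 2) = 0.
    have -> : (extphi X r - t) * (extphi X r + t - iota h *+ 2) =
      (extphi X r - iota h) ^+ 2 - (t - iota h) ^+ 2 by ring.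
    by rewrite er e subrr.
  move/eqP; rewrite mulf_eq0 => /orP[] /eqP h0; apply: nH.
    by exists r; apply/eqP; rewrite -subr_eq0 h0.
  exists ((h *+ 2)%:A - r); rewrite rmorphB /= extphiA rmorphMn.
  by apply/eqP; rewrite -subr_eq0; apply/eqP; rewrite -[RHS]oppr0 -h0; ring.
exact: step0 qt irr sq.
Qed.

Lemma ext_for (ts : seq L) : (forall t, t \in ts -> (degK iota t <= 2)%N) ->
  exists X : ext, forall t, t \in ts -> exists e, extphi X e = t.
Proof.
elim: ts => [|t ts IH] hts.
  by exists ext_base.
have [X hX] := IH (fun t' ht' => hts t' (mem_behead (ht' : t' \in behead (t :: ts)))).
have [Y [hY1 hY2]] := step X (hts t (mem_head _ _)).
exists Y => t'; rewrite inE => /orP[/eqP -> // | ht'].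
have [e <-] := hX _ ht'; exact: hY1.
Qed.

Lemma range_subfield (X : ext) : subfield_over iota (fun x => exists e, extphi X e = x).
Proof.
split.
- by move=> a; exists (a%:A); rewrite extphiA.
- by move=> _ _ [a <-] [b <-]; exists (a + b); rewrite rmorphD.
- by move=> _ [a <-]; exists (- a); rewrite rmorphN.
- by move=> _ _ [a <-] [b <-]; exists (a * b); rewrite rmorphM.
- by move=> _ [a <-]; exists (a^-1); rewrite fmorphV.
Qed.

Lemma ext_facts (X : ext) :
  (forall e, regularK iota (extphi X e)) /\
  (forall a b, HK iota (extphi X a + extphi X b) = HK iota (extphi X a) + HK iota (extphi X b)).
Proof.
have [m hm] := extdim X.
have nN : ((\dim {:extE X})%:R : F) != 0.
  by rewrite hm natrX expf_neq0.
pose e0 := vbasis {:extE X}.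
pose f : {linear extE X -> 'rV[F]_(\dim {:extE X})} :=
  HB.pack (passmx.rVof e0) (GRing.isSemilinear.Build F _ _ _ (passmx.rVof e0) (GRing.semilinear_linear (passmx.rVof_linear e0))).
have fK : cancel f (passmx.vecof e0) := passmx.rVofK (vbasisP _).
have gK : cancel (passmx.vecof e0) f := passmx.vecofK (vbasisP _).
have [T [TD hT]] := rep_facts (extphiA X) nN fK gK.
split; first by move=> e; case: (hT e).
move=> a b; rewrite -rmorphD.
apply: (mulIf nN); rewrite mulrDl.
by have [_ ->] := hT (a + b); have [_ ->] := hT a; have [_ ->] := hT b; rewrite TD.
Qed.

Lemma part_b (ts : seq L) : (forall t, t \in ts -> (degK iota t <= 2)%N) ->
     (forall x, in_gen_field iota ts x -> regularK iota x) /\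
     kinv iota (\sum_(t <- ts) t) = \sum_(t <- ts) kinv iota t.
Proof.
move=> hts; have [X hX] := ext_for hts.
have [reg add] := ext_facts X.
split.
  move=> x gx; have [e <-] := gx _ (range_subfield X) hX; exact: reg.
have kadd : forall a b, kinv iota (extphi X a + extphi X b) =
    kinv iota (extphi X a) + kinv iota (extphi X b).
  by move=> a b; rewrite /kinv /VK add rmorphD; ring.
suff : forall s, {subset s <= ts} -> (exists e, extphi X e = \sum_(t <- s) t) /\
   kinv iota (\sum_(t <- s) t) = \sum_(t <- s) kinv iota t.
  by move/(_ ts (fun t h => h)) => [].
elim=> [|t s IH] sub.
  rewrite !big_nil; split; first by exists 0; rewrite rmorph0.
  by have := kinv_K 0; rewrite rmorph0.
have [[e he] hk] := IH (fun t' h => sub t' (mem_behead (h : t' \in behead (t :: s)))).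
have [et het] := hX t (sub t (mem_head _ _)).
rewrite !big_cons; split; first by exists (et + e); rewrite rmorphD het he.
by rewrite -het -he kadd he hk.
Qed.

Lemma main_all :
  (forall (alpha : F) (beta : L),
     inKerH iota beta -> degK iota (iota alpha + beta) = 2%N ->
     let lam := iota alpha + beta in
     [/\ kinv iota lam = iota alpha - beta,
         root (map_poly iota (minpolyK iota lam)) (kinv iota lam),
         kinv iota lam != lam &
         forall mu : L, root (map_poly iota (minpolyK iota lam)) mu ->
           mu = lam \/ mu = kinv iota lam]) /\
  (forall ts : seq L, (forall t, t \in ts -> (degK iota t <= 2)%N) ->
     (forall x, in_gen_field iota ts x -> regularK iota x) /\
     kinv iota (\sum_(t <- ts) t) = \sum_(t <- ts) kinv iota t) /\
  (forall lam : L, (degK iota lam <= 2)%N ->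
     forall x y : L, in_gen_field iota [:: lam] x -> in_gen_field iota [:: lam] y ->
       kinv iota (x * y) = kinv iota x * kinv iota y) /\
  (forall b b' : L, inKerH iota b -> inKerH iota b' ->
     degK iota b = 2%N -> degK iota b' = 2%N ->
     (inK iota (b * b') <-> lin_dep2 iota b b') /\
     (~ lin_dep2 iota b b' -> degK iota (b * b') = 2%N /\ inKerH iota (b * b'))) /\
  (forall b : L, degK iota b = 2%N ->
     (inKerH iota b <-> ~ inK iota b /\ inK iota (b ^+ 2))).
Proof.
split; first exact: part_a.
split; first exact: part_b.
split; first exact: part_c.
split; first exact: part_d.
exact: part_e.
Qed.

End P0.

Theorem proposition1p12 (F : fieldType) (L : closedFieldType)
    (iota : {rmorphism F -> L})
    (Lalg : forall x : L, exists p : {poly F}, p != 0 /\ root (map_poly iota p) x)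
    (char2 : (2%:R : F) != 0) :
  (* (a) *)
  (forall (alpha : F) (beta : L),
     inKerH iota beta -> degK iota (iota alpha + beta) = 2%N ->
     let lam := iota alpha + beta in
     [/\ kinv iota lam = iota alpha - beta,
         root (map_poly iota (minpolyK iota lam)) (kinv iota lam),
         kinv iota lam != lam &
         forall mu : L, root (map_poly iota (minpolyK iota lam)) mu ->
           mu = lam \/ mu = kinv iota lam]) /\
  (* (b) *)
  (forall ts : seq L, (forall t, t \in ts -> (degK iota t <= 2)%N) ->
     (forall x, in_gen_field iota ts x -> regularK iota x) /\
     kinv iota (\sum_(t <- ts) t) = \sum_(t <- ts) kinv iota t) /\
  (* (c) *)
  (forall lam : L, (degK iota lam <= 2)%N ->
     forall x y : L, in_gen_field iota [:: lam] x -> in_gen_field iota [:: lam] y ->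
       kinv iota (x * y) = kinv iota x * kinv iota y) /\
  (* (d) *)
  (forall b b' : L, inKerH iota b -> inKerH iota b' ->
     degK iota b = 2%N -> degK iota b' = 2%N ->
     (inK iota (b * b') <-> lin_dep2 iota b b') /\
     (~ lin_dep2 iota b b' -> degK iota (b * b') = 2%N /\ inKerH iota (b * b'))) /\
  (* (e) *)
  (forall b : L, degK iota b = 2%N ->
     (inKerH iota b <-> ~ inK iota b /\ inK iota (b ^+ 2))).
Proof. exact: main_all Lalg char2. Qed.
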